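(* Let $(X,d)$ be a metric space with $|X|\ge 2$ and let $\tilde x$ be a $d$-statistically convergent sequence of points of $X$. Let $\tilde x'$ be a subsequence of $\tilde x$ with the following property: whenever $\tilde y$ is a sequence in $X$ statistically equivalent to $\tilde x$ and $\tilde y'$ is a subsequence of $\tilde y$ with $K_{\tilde y'}=K_{\tilde x'}$, the subsequence $\tilde y'$ is $d$-statistically convergent. Then $\limsup_{n\to\infty}\frac{|K_{\tilde x'}(n)|}{n}>0$.
   Context: For a subsequence $\tilde z'=(z_{n(k)})$ of a sequence $(z_n)$ (with $(n(k))$ infinite and strictly increasing), $K_{\tilde z'}=\{n(k):k\in\mathbb N\}$ and $K_{\tilde z'}(n)=\{m\in K_{\tilde z'}:m\le n\}$. A sequence $(z_k)$ is $d$-statistically convergent if there is $a\in X$ with $\lim_{n\to\infty}\frac1n|\{k\le n: d(z_k,a)\ge\epsilon\}|=0$ for all $\epsilon>0$; subsequences are regarded as sequences indexed by $k$. A set $M\subseteq\mathbb N$ is statistical dense if $\lim_{n\to\infty}|\{m\in M:m\le n\}|/n=1$; sequences $(x_n),(y_n)$ are statistically equivalent if $x_n=y_n$ for all $n$ in some statistical dense $M$. *)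

(* Defs.v *)
From Stdlib Require Import Reals Lra Lia List Classical ClassicalDescription.
From Coquelicot Require Import Coquelicot.
Open Scope R_scope.

Definition is_metric {X : Type} (d : X -> X -> R) : Prop :=
  (forall x y, 0 <= d x y) /\
  (forall x y, d x y = 0 <-> x = y) /\
  (forall x y, d x y = d y x) /\
  (forall x y z, d x z <= d x y + d y z).

(* Number of indices k in {0, ..., n-1} satisfying the (arbitrary) predicate P.
   Sequences are indexed by nat starting at 0, so the first n terms are
   indices 0..n-1. *)
Definition count_lt (P : nat -> Prop) (n : nat) : nat :=
  length (filter (fun k => if excluded_middle_informative (P k) then true else false)
                 (seq 0 n)).

Definition stat_convergent {X : Type} (d : X -> X -> R) (z : nat -> X) : Prop :=
  exists a : X, forall eps : R, 0 < eps ->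
    is_lim_seq (fun n => INR (count_lt (fun k => eps <= d (z k) a) n) / INR n) 0.

Definition stat_dense (M : nat -> Prop) : Prop :=
  is_lim_seq (fun n => INR (count_lt M n) / INR n) 1.

Definition stat_equiv {X : Type} (x y : nat -> X) : Prop :=
  exists M : nat -> Prop, stat_dense M /\ forall n, M n -> x n = y n.

(* A subsequence is given by a strictly increasing index map nk; the
   subsequence itself is (fun k => z (nk k)). *)
Definition strictly_increasing (nk : nat -> nat) : Prop :=
  forall i j, (i < j)%nat -> (nk i < nk j)%nat.

(* K_{z'} = range of the index map. *)
Definition Kset (nk : nat -> nat) : nat -> Prop := fun m => exists k, nk k = m.

(* Main.v *)
Require Import Defs.
From Stdlib Require Import Reals Lra Lia List Classical ClassicalDescription.
From Coquelicot Require Import Coquelicot.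
Open Scope R_scope.

Lemma count_S_in (P : nat -> Prop) n : P n -> count_lt P (S n) = S (count_lt P n).
Proof.
  intro H. unfold count_lt. rewrite seq_S, filter_app, length_app. simpl.
  destruct (excluded_middle_informative (P n)); [simpl; lia | contradiction].
Qed.

Lemma count_S_out (P : nat -> Prop) n : ~ P n -> count_lt P (S n) = count_lt P n.
Proof.
  intro H. unfold count_lt. rewrite seq_S, filter_app, length_app. simpl.
  destruct (excluded_middle_informative (P n)); [contradiction | simpl; lia].
Qed.

Lemma count_mono (P Q : nat -> Prop) n :
  (forall k, P k -> Q k) -> (count_lt P n <= count_lt Q n)%nat.
Proof.
  intro H. induction n. { unfold count_lt; simpl; lia. }
  destruct (classic (P n)) as [hp|hp].
  - rewrite (count_S_in P n hp), (count_S_in Q n (H n hp)). lia.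
  - rewrite (count_S_out P n hp). destruct (classic (Q n)) as [hq|hq].
    + rewrite (count_S_in Q n hq); lia.
    + rewrite (count_S_out Q n hq); lia.
Qed.

Lemma count_compl (P : nat -> Prop) n :
  (count_lt P n + count_lt (fun k => ~ P k) n)%nat = n.
Proof.
  induction n. { unfold count_lt; simpl; lia. }
  destruct (classic (P n)) as [hp|hp].
  - rewrite (count_S_in P n hp), (count_S_out (fun k => ~ P k) n); [lia|tauto].
  - rewrite (count_S_out P n hp), (count_S_in (fun k => ~ P k) n hp); lia.
Qed.

Lemma count_even n : count_lt Nat.Even (2 * n) = n.
Proof.
  induction n. { unfold count_lt; simpl; lia. }
  replace (2 * S n)%nat with (S (S (2 * n))) by lia.
  rewrite count_S_out, count_S_in; [lia| exists n; lia |].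
  intros [m Hm]; lia.
Qed.

Lemma count_odd n : count_lt (fun k => ~ Nat.Even k) (2 * n) = n.
Proof.
  induction n. { unfold count_lt; simpl; lia. }
  replace (2 * S n)%nat with (S (S (2 * n))) by lia.
  rewrite count_S_in, count_S_out; [lia| | ].
  - intro H; apply H; exists n; lia.
  - intros [m Hm]; lia.
Qed.

Lemma ratio_nonneg (c n : nat) : 0 <= INR c / INR n.
Proof.
  destruct n. { simpl. unfold Rdiv. rewrite Rinv_0. lra. }
  apply Rdiv_le_0_compat; [apply pos_INR | apply lt_0_INR; lia].
Qed.

Lemma half_bound (P : nat -> Prop) m :
  (m <= count_lt P (2 * m))%nat -> (0 < m)%nat -> 1/2 <= INR (count_lt P (2*m)) / INR (2*m).
Proof.
  intros H Hm. apply le_INR in H. apply lt_0_INR in Hm.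
  rewrite mult_INR. replace (INR 2) with 2 by (simpl; lra).
  apply (Rmult_le_reg_r (2 * INR m)); [lra|].
  replace (INR (count_lt P (2 * m)) / (2 * INR m) * (2 * INR m))
    with (INR (count_lt P (2 * m))) by (field; lra). lra.
Qed.

Theorem theorem7 (X : Type) (d : X -> X -> R) (Hd : is_metric d)
  (H2 : exists a b : X, a <> b)
  (x : nat -> X) (Hx : stat_convergent d x)
  (nx : nat -> nat) (Hnx : strictly_increasing nx)
  (Hprop : forall (y : nat -> X), stat_equiv x y ->
             forall ny : nat -> nat, strictly_increasing ny ->
               (forall m, Kset ny m <-> Kset nx m) ->
               stat_convergent d (fun k => y (ny k))) :
  Rbar_lt 0 (LimSup_seq (fun n => INR (count_lt (Kset nx) n) / INR n)).
Proof.
  destruct (classic (Rbar_lt 0 (LimSup_seq (fun n => INR (count_lt (Kset nx) n) / INR n))))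
    as [h|h]; [exact h|exfalso].
  set (u := fun n => INR (count_lt (Kset nx) n) / INR n) in h.
  assert (Hu0 : is_lim_seq u 0).
  { unfold LimSup_seq in h. destruct (ex_LimSup_seq u) as [l Hl]. simpl in h.
    destruct l as [l| |]; simpl in h, Hl.
    - apply is_lim_seq_spec. intro eps. destruct (Hl eps) as [_ [N HN]].
      exists N. intros n Hn. specialize (HN n Hn).
      pose proof (ratio_nonneg (count_lt (Kset nx) n) n).
      unfold u in *. rewrite Rminus_0_r, Rabs_right; lra.
    - tauto.
    - destruct (Hl 0) as [N HN]. specialize (HN N (le_n _)).
      pose proof (ratio_nonneg (count_lt (Kset nx) N) N). unfold u in HN; lra. }
  destruct H2 as [a [b Hab]].
  destruct Hd as [Hpos [Hzero [Hsym Htri]]].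
  pose (y := fun m => if excluded_middle_informative (exists k, nx k = m /\ Nat.Even k) then a
                      else if excluded_middle_informative (Kset nx m) then b else x m).
  assert (Hinj : forall i j, nx i = nx j -> i = j).
  { intros i j E. destruct (Nat.lt_trichotomy i j) as [H|[H|H]]; auto.
    - apply Hnx in H; lia. - apply Hnx in H; lia. }
  assert (Hya : forall k, Nat.Even k -> y (nx k) = a).
  { intros k Hk. unfold y. destruct (excluded_middle_informative _) as [_|n]; auto.
    exfalso; apply n; eauto. }
  assert (Hyb : forall k, ~ Nat.Even k -> y (nx k) = b).
  { intros k Hk. unfold y. destruct (excluded_middle_informative _) as [[k' [E1 E2]]|n].
    - apply Hinj in E1; subst; contradiction.
    - destruct (excluded_middle_informative _) as [_|n2]; auto. exfalso; apply n2; exists k; auto. }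
  assert (Heq : stat_equiv x y).
  { exists (fun m => ~ Kset nx m). split.
    - unfold stat_dense. apply is_lim_seq_incr_1.
      apply is_lim_seq_ext with (u := fun n => 1 - u (S n)).
      + intro n. unfold u. pose proof (count_compl (Kset nx) (S n)) as C.
        apply (f_equal INR) in C. rewrite plus_INR in C.
        assert (INR (S n) <> 0) by (apply not_0_INR; lia).
        replace (INR (count_lt (fun k => ~ Kset nx k) (S n)))
          with (INR (S n) - INR (count_lt (Kset nx) (S n))) by lra.
        field; auto.
      + replace (Finite 1) with (Finite (1 - 0)) by (f_equal; ring).
        apply is_lim_seq_minus'; [apply is_lim_seq_const|].
        apply (is_lim_seq_incr_1 u 0); exact Hu0.
    - intros m Hm. unfold y. destruct (excluded_middle_informative _) as [[k [E _]]|_].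
      + exfalso; apply Hm; exists k; auto.
      + destruct (excluded_middle_informative _); [contradiction|reflexivity]. }
  destruct (Hprop y Heq nx Hnx (fun m => iff_refl _)) as [c Hc].
  assert (Hdab : 0 < d a b).
  { destruct (Rle_lt_or_eq_dec 0 (d a b) (Hpos a b)) as [H|H]; auto.
    exfalso; apply Hab; apply Hzero; auto. }
  assert (Heps : 0 < d a b / 2) by lra.
  specialize (Hc _ Heps).
  apply is_lim_seq_spec in Hc.
  assert (Hhalf : 0 < 1/2) by lra.
  destruct (Hc (mkposreal _ Hhalf)) as [N HN]. simpl in HN.
  specialize (HN (2 * S N)%nat ltac:(lia)).
  set (P := fun k => d a b / 2 <= d (y (nx k)) c) in HN.
  assert (Hcnt : (S N <= count_lt P (2 * S N))%nat).
  { destruct (Rle_or_lt (d a b / 2) (d a c)) as [H|H].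
    - rewrite <- (count_even (S N)) at 1. apply count_mono.
      intros k Hk. unfold P. rewrite Hya; auto.
    - rewrite <- (count_odd (S N)) at 1. apply count_mono.
      intros k Hk. unfold P. rewrite Hyb; auto. pose proof (Hsym c b).
      pose proof (Htri a c b). lra. }
  pose proof (half_bound P (S N) Hcnt ltac:(lia)).
  rewrite Rminus_0_r, Rabs_right in HN; lra.
Qed.
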